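(* Let $I=[0,1]$ and let $H:I\to\mathbb{R}$ be a Darboux function. Then there is a countable set $D\subseteq I$ with the following property: for every continuous function $F:I\to\mathbb{R}$, if for all $a,b\in D$ and every real $t$ with $H(a)+F(a)<t<H(b)+F(b)$ there is some $c$ between $a$ and $b$ with $H(c)+F(c)=t$, then $H+F$ is Darboux.
   Context: A function $H:I\to\mathbb{R}$ is Darboux if the image under $H$ of every interval contained in $I$ is an interval. *)

(* Defs.v *)
From Stdlib Require Import Reals.
Open Scope R_scope.

Definition I01 (x : R) : Prop := 0 <= x <= 1.

Definition is_interval (S : R -> Prop) : Prop :=
  forall x y z, S x -> S y -> x <= z <= y -> S z.

Definition image (H : R -> R) (S : R -> Prop) : R -> Prop :=
  fun y => exists x, S x /\ H x = y.

Definition Darboux_on_I (H : R -> R) : Prop :=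
  forall J : R -> Prop, is_interval J -> (forall x, J x -> I01 x) ->
    is_interval (image H J).

Definition countable_set (D : R -> Prop) : Prop :=
  exists f : R -> nat, forall x y, D x -> D y -> f x = f y -> x = y.

Definition continuous_on_I (F : R -> R) : Prop :=
  forall x, I01 x -> forall eps, eps > 0 -> exists delta, delta > 0 /\
    forall y, I01 y -> Rabs (y - x) < delta -> Rabs (F y - F x) < eps.

(* Main.v *)
Require Import Defs.
From Stdlib Require Import Reals Lra Lia Psatz ZArith ClassicalEpsilon Classical.
From Stdlib Require Cantor.
Open Scope R_scope.

Definition box (H : R -> R) (n : nat) (p : R) : Prop :=
  let '(k, r1) := Cantor.of_nat n in
  let '(i, r2) := Cantor.of_nat r1 in
  let '(m1, m2) := Cantor.of_nat r2 in
  I01 p /\ Rabs (p - INR i / INR (S k)) < 2 / INR (S k) /\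
  Rabs (H p - (INR m1 - INR m2) / INR (S k)) < 2 / INR (S k).

Definition pt (H : R -> R) (n : nat) : R := epsilon (inhabits 0) (box H n).

Definition DD (H : R -> R) (x : R) : Prop :=
  exists n, (exists p, box H n p) /\ pt H n = x.

Lemma DD_count H : countable_set (DD H).
Proof.
  exists (fun x => epsilon (inhabits 0%nat) (fun n => (exists p, box H n p) /\ pt H n = x)).
  intros x y Dx Dy E.
  pose proof (epsilon_spec (inhabits 0%nat) (fun n => (exists p, box H n p) /\ pt H n = x) Dx) as [_ Ex].
  pose proof (epsilon_spec (inhabits 0%nat) (fun n => (exists p, box H n p) /\ pt H n = y) Dy) as [_ Ey].
  rewrite E in Ex. congruence.
Qed.

Lemma box_pt H n : (exists p, box H n p) -> box H n (pt H n).
Proof. intro. unfold pt. now apply epsilon_spec. Qed.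

Lemma DD_I H x : DD H x -> I01 x.
Proof.
  intros [n [Hn E]]. subst. pose proof (box_pt H n Hn) as B. unfold box in B.
  destruct (Cantor.of_nat n) as [k r1]. destruct (Cantor.of_nat r1) as [i r2].
  destruct (Cantor.of_nat r2) as [m1 m2]. tauto.
Qed.

Lemma center_lemma K p c : 0 < K -> -1 <= p * K - c <= 1 -> Rabs (p - c / K) < 2 / K.
Proof.
  intros HK Hb. apply Rabs_def1.
  - unfold Rdiv. set (u := / K). assert (K * u = 1) by (unfold u; field; lra).
    assert (0 < u) by (unfold u; apply Rinv_0_lt_compat; lra).
    replace (p - c * u) with ((p * K - c) * u) by (rewrite Rmult_minus_distr_r, Rmult_assoc, H; ring).
    nra.
  - unfold Rdiv. set (u := / K). assert (K * u = 1) by (unfold u; field; lra).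
    assert (0 < u) by (unfold u; apply Rinv_0_lt_compat; lra).
    replace (p - c * u) with ((p * K - c) * u) by (rewrite Rmult_minus_distr_r, Rmult_assoc, H; ring).
    nra.
Qed.

Lemma density H p r : I01 p -> 0 < r ->
  exists a, DD H a /\ Rabs (a - p) < r /\ Rabs (H a - H p) < r.
Proof.
  intros Ip Hr.
  destruct (archimed_cor1 (r / 4)) as [N [HN1 HN2]]; [lra|].
  set (K := INR (S N)).
  assert (HK : 0 < K) by (unfold K; apply lt_0_INR; lia).
  assert (HNK : INR N < K) by (unfold K; rewrite S_INR; lra).
  assert (HN0 : 0 < INR N) by (apply lt_0_INR; lia).
  assert (H3 : 4 / K < r).
  { assert (r / 4 * INR N > 1).
    { apply Rmult_lt_reg_r with (/ INR N). apply Rinv_0_lt_compat; lra.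
      rewrite Rmult_assoc, Rinv_r by lra. lra. }
    apply Rmult_lt_reg_r with K; [lra|]. unfold Rdiv. rewrite Rmult_assoc, Rinv_l by lra. nra. }
  set (z := p * K). destruct (archimed z) as [Az1 Az2].
  assert (Hz : 0 <= z) by (unfold z, I01 in *; nra).
  set (i := Z.to_nat (up z)).
  assert (Ei : INR i = IZR (up z)).
  { unfold i. rewrite INR_IZR_INZ, Z2Nat.id; [reflexivity|].
    apply le_IZR. lra. }
  set (w := H p * K). destruct (archimed w) as [Aw1 Aw2].
  set (m1 := Z.to_nat (up w)). set (m2 := Z.to_nat (- up w)).
  assert (Em : INR m1 - INR m2 = IZR (up w)).
  { unfold m1, m2. rewrite !INR_IZR_INZ, <- minus_IZR. f_equal. lia. }
  set (n := Cantor.to_nat (N, Cantor.to_nat (i, Cantor.to_nat (m1, m2)))).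
  assert (Bp : box H n p).
  { unfold box, n. rewrite !Cantor.cancel_of_to. fold K. split; [exact Ip|split].
    - apply center_lemma; [lra|]. fold z. lra.
    - rewrite Em. apply center_lemma; [lra|]. fold w. lra. }
  exists (pt H n). split; [exists n; split; [exists p; exact Bp| reflexivity]|].
  pose proof (box_pt H n (ex_intro _ p Bp)) as Ba.
  set (a := pt H n) in *. clearbody a.
  unfold box, n in Bp, Ba. rewrite !Cantor.cancel_of_to in Bp, Ba. fold K in Bp, Ba.
  destruct Bp as [_ [B1 B2]]. destruct Ba as [_ [B3 B4]].
  assert (E6 : 2 / K + 2 / K = 4 / K) by (unfold Rdiv; ring).
  split.
  - replace (a - p) with ((a - INR i / K) - (p - INR i / K)) by ring.
    eapply Rle_lt_trans; [apply Rabs_triang|]. rewrite Rabs_Ropp. lra.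
  - replace (H a - H p) with ((H a - (INR m1 - INR m2) / K) - (H p - (INR m1 - INR m2) / K)) by ring.
    eapply Rle_lt_trans; [apply Rabs_triang|]. rewrite Rabs_Ropp. lra.
Qed.

Ltac mm := repeat match goal with
  | |- context [Rmin ?a ?b] => destruct (Rle_dec a b); [rewrite (Rmin_left a b) by assumption | rewrite (Rmin_right a b) by lra]
  | |- context [Rmax ?a ?b] => destruct (Rle_dec a b); [rewrite (Rmax_right a b) by assumption | rewrite (Rmax_left a b) by lra]
  | h : context [Rmin ?a ?b] |- _ => destruct (Rle_dec a b); [rewrite (Rmin_left a b) in h by assumption | rewrite (Rmin_right a b) in h by lra]
  | h : context [Rmax ?a ?b] |- _ => destruct (Rle_dec a b); [rewrite (Rmax_right a b) in h by assumption | rewrite (Rmax_left a b) in h by lra]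
  end.

Lemma DS H p q d : Darboux_on_I H -> I01 p -> I01 q -> p <> q -> 0 < d ->
  exists a, Rmin p q <= a <= Rmax p q /\ a <> p /\ Rabs (H a - H p) < d.
Proof.
  intros DH Ip Iq Npq Hd.
  set (J := fun x => Rmin p q <= x <= Rmax p q).
  assert (IJ : is_interval J) by (unfold is_interval, J; intros; lra).
  assert (JI : forall x, J x -> I01 x) by (unfold J, I01 in *; intros x Jx; mm; lra).
  assert (Jp : J p) by (unfold J; mm; lra).
  assert (Jq : J q) by (unfold J; mm; lra).
  pose proof (DH J IJ JI) as DJ.
  assert (Ip' : image H J (H p)) by (exists p; auto).
  assert (Iq' : image H J (H q)) by (exists q; auto).
  destruct (total_order_T (H p) (H q)) as [[Hlt|Heq]|Hgt].
  - set (v := H p + Rmin (d/2) ((H q - H p)/2)).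
    assert (Hv : H p < v < H q) by (unfold v; mm; lra).
    destruct (DJ (H p) (H q) v Ip' Iq') as [x [Jx Ex]]; [lra|].
    exists x. split; [exact Jx|]. split; [intro; subst; lra|].
    rewrite Ex. unfold v. rewrite Rabs_right; mm; lra.
  - exists q. split; [exact Jq|]. split; [auto|]. rewrite Heq, Rminus_diag, Rabs_R0. lra.
  - set (v := H p - Rmin (d/2) ((H p - H q)/2)).
    assert (Hv : H q < v < H p) by (unfold v; mm; lra).
    destruct (DJ (H q) (H p) v Iq' Ip') as [x [Jx Ex]]; [lra|].
    exists x. split; [exact Jx|]. split; [intro; subst; lra|].
    rewrite Ex. unfold v. rewrite Rabs_left; mm; lra.
Qed.

Lemma Rabs_lt_iff x e : Rabs x < e <-> -e < x < e.
Proof. split; [intro h; split; [apply Rabs_def2 in h; tauto | apply Rabs_def2 in h; tauto] | intro; apply Rabs_def1; tauto]. Qed.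

Lemma AP H p q d : Darboux_on_I H -> I01 p -> I01 q -> p <> q -> 0 < d ->
  exists a, DD H a /\ Rmin p q <= a <= Rmax p q /\ Rabs (a - p) < d /\ Rabs (H a - H p) < d.
Proof.
  intros DH Ip Iq Npq Hd.
  destruct (Rlt_le_dec p q) as [Hlt|Hge].
  - set (q' := Rmin (p + d/4) ((p+q)/2)).
    assert (Hq' : p < q' < q /\ q' - p <= d/4) by (unfold q'; mm; lra).
    assert (Iq' : I01 q') by (unfold I01 in *; lra).
    destruct (DS H p q' (d/2) DH Ip Iq') as [a' [B1 [B2 B3]]]; [lra|lra|].
    rewrite Rmin_left, Rmax_right in B1 by lra.
    assert (Ia' : I01 a') by (unfold I01 in *; lra).
    set (rr := Rmin (Rmin (a' - p) (q - q')) (d/4)).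
    assert (Hr : 0 < rr /\ rr <= a' - p /\ rr <= q - q' /\ rr <= d/4) by (unfold rr; mm; lra).
    destruct (density H a' rr Ia') as [a [Da [A1 A2]]]; [lra|].
    exists a. split; [exact Da|].
    rewrite Rabs_lt_iff in A1, A2, B3 |- *. rewrite Rabs_lt_iff.
    repeat split; mm; lra.
  - assert (Hlt : q < p) by lra.
    set (q' := Rmax (p - d/4) ((p+q)/2)).
    assert (Hq' : q < q' < p /\ p - q' <= d/4) by (unfold q'; mm; lra).
    assert (Iq' : I01 q') by (unfold I01 in *; lra).
    destruct (DS H p q' (d/2) DH Ip Iq') as [a' [B1 [B2 B3]]]; [lra|lra|].
    rewrite Rmin_right, Rmax_left in B1 by lra.
    assert (Ia' : I01 a') by (unfold I01 in *; lra).
    set (rr := Rmin (Rmin (p - a') (q' - q)) (d/4)).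
    assert (Hr : 0 < rr /\ rr <= p - a' /\ rr <= q' - q /\ rr <= d/4) by (unfold rr; mm; lra).
    destruct (density H a' rr Ia') as [a [Da [A1 A2]]]; [lra|].
    exists a. split; [exact Da|].
    rewrite Rabs_lt_iff in A1, A2, B3 |- *. rewrite Rabs_lt_iff.
    repeat split; mm; lra.
Qed.

Lemma KEY H F x y z : Darboux_on_I H -> continuous_on_I F ->
  (forall a b t, DD H a -> DD H b ->
         H a + F a < t < H b + F b ->
         exists c, Rmin a b <= c <= Rmax a b /\ H c + F c = t) ->
  I01 x -> I01 y -> x <> y -> H x + F x < z < H y + F y ->
  exists c, Rmin x y <= c <= Rmax x y /\ H c + F c = z.
Proof.
  intros DH FC Hyp Ix Iy Nxy Hz.
  set (d := Rmin (z - (H x + F x)) (H y + F y - z) / 2).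
  assert (Hd : 0 < d /\ 2 * d <= z - (H x + F x) /\ 2 * d <= H y + F y - z) by (unfold d; mm; lra).
  destruct (FC x Ix d) as [e1 [He1 C1]]; [lra|].
  destruct (FC y Iy d) as [e2 [He2 C2]]; [lra|].
  destruct (AP H x y (Rmin d e1) DH Ix Iy Nxy) as [a [Da [Ba [A1 A2]]]]; [mm; lra|].
  destruct (AP H y x (Rmin d e2) DH Iy Ix (not_eq_sym Nxy)) as [b [Db [Bb [B1 B2]]]]; [mm; lra|].
  assert (Ia := DD_I H a Da). assert (Ib := DD_I H b Db).
  assert (Fa : Rabs (F a - F x) < d) by (apply C1; [exact Ia|]; eapply Rlt_le_trans; [exact A1|apply Rmin_r]).
  assert (Fb : Rabs (F b - F y) < d) by (apply C2; [exact Ib|]; eapply Rlt_le_trans; [exact B1|apply Rmin_r]).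
  assert (A2' : Rabs (H a - H x) < d) by (eapply Rlt_le_trans; [exact A2|apply Rmin_l]).
  assert (B2' : Rabs (H b - H y) < d) by (eapply Rlt_le_trans; [exact B2|apply Rmin_l]).
  rewrite Rabs_lt_iff in Fa, Fb, A2', B2'.
  destruct (Hyp a b z Da Db) as [c [Hc Ec]]; [lra|].
  exists c. split; [|exact Ec].
  rewrite (Rmin_comm y x), (Rmax_comm y x) in Bb.
  revert Ba Bb Hc. clear. intros. mm; lra.
Qed.

Theorem mainTheorem8 :
  forall H : R -> R, Darboux_on_I H ->
  exists D : R -> Prop,
    countable_set D /\ (forall x, D x -> I01 x) /\
    forall F : R -> R, continuous_on_I F ->
      (forall a b t, D a -> D b ->
         H a + F a < t < H b + F b ->
         exists c, Rmin a b <= c <= Rmax a b /\ H c + F c = t) ->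
      Darboux_on_I (fun x => H x + F x).
Proof.
  intros H DH. exists (DD H). split; [apply DD_count|]. split; [apply DD_I|].
  intros F FC Hyp J HJ JI u w z [x [Jx Ex]] [y [Jy Ey]] Hz.
  destruct (Req_dec z u) as [Ezu|Nzu]; [exists x; split; [exact Jx|congruence]|].
  destruct (Req_dec z w) as [Ezw|Nzw]; [exists y; split; [exact Jy|congruence]|].
  assert (Nxy : x <> y) by (intro; subst; lra).
  destruct (KEY H F x y z DH FC Hyp (JI x Jx) (JI y Jy) Nxy) as [c [Bc Ec]]; [lra|].
  exists c. split; [|exact Ec].
  destruct (Rle_dec x y).
  - rewrite Rmin_left, Rmax_right in Bc by lra. exact (HJ x y c Jx Jy Bc).
  - rewrite Rmin_right, Rmax_left in Bc by lra. exact (HJ y x c Jy Jx Bc).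
Qed.
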